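(* Let $t\geqslant 2$, $r\in\{2t,2t+1\}$ and $n\geqslant 2r-1$. (1) Let $2\leqslant s\leqslant r$ and $\ell=2s-1$. Let $I^{\ell}\in\mathrm{Sym}_n$ be a permutation whose non-trivial cycles are one cycle of length $\ell$ and $r-s$ cycles of length $2$, so that $w_H(I^\ell)=2r-1$. Then $$|N_3(I^{\ell})|=\begin{cases}\ell\sum_{i=1}^{s-1}\binom{r-s}{t-i}, & r=2t,\\[2pt] \ell\sum_{i=1}^{s-2}\binom{r-s}{t-i}, & r=2t+1.\end{cases}$$ (2) Let $2\leqslant s\leqslant r-2$ and $\ell=2s$. Let $I^{\ell}\in\mathrm{Sym}_n$ be a permutation whose non-trivial cycles are one cycle of length $\ell$, one cycle of length $3$ and $r-s-2$ cycles of length $2$, so that $w_H(I^\ell)=2r-1$. Then $$|N_3(I^{\ell})|=\begin{cases}2(\ell+3)\binom{r-s-2}{t-1}+\ell\sum_{i=1}^{s-2}\binom{r-s-1}{t-i-1}, & r=2t,\\[2pt] \ell\sum_{i=1}^{s-1}\binom{r-s-1}{t-i}, & r=2t+1.\end{cases}$$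
   Context: $\mathrm{Sym}_n$ is the symmetric group on $[n]$, and $w_H(\pi)=|\{i:\pi(i)\neq i\}|$. $Tc(\pi)=\{(i,\pi(i)):\pi(i)\neq i\}$. For $\pi$ with $w_H(\pi)=2r-1$, $N_3(\pi)=\{\sigma\in\mathrm{Sym}_n:|Tc(\sigma)\cap Tc(\pi)|=r-1,\ |Tc(\sigma)|=r\}$. Binomial convention: $\binom{0}{0}=1$ and $\binom{p}{q}=0$ if $p<q$, $p<0$ or $q<0$. Empty sums are $0$. *)

(* Defs.v *)
From mathcomp Require Import all_boot all_order all_algebra all_fingroup.
Set Implicit Arguments. Unset Strict Implicit. Unset Printing Implicit Defensive.

Definition wH (n : nat) (p : {perm 'I_n}) : nat := #|[set i | p i != i]|.

Definition Tc (n : nat) (p : {perm 'I_n}) : {set 'I_n * 'I_n} :=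
  [set x | (x.2 == p x.1) && (p x.1 != x.1)].

Definition N3 (n r : nat) (p : {perm 'I_n}) : {set {perm 'I_n}} :=
  [set q | (#|Tc q :&: Tc p| == r.-1) && (#|Tc q| == r)].

Definition cycle_count (n : nat) (p : {perm 'I_n}) (k : nat) : nat :=
  #|[set X in porbits p | #|X| == k]|.

Definition binz (a : nat) (b : int) : nat :=
  match b with Posz k => 'C(a, k) | Negz _ => 0 end.

(* Main.v *)
Require Import Defs.
From mathcomp Require Import all_boot all_order all_algebra all_fingroup.
From mathcomp Require Import zify.
Set Implicit Arguments. Unset Strict Implicit. Unset Printing Implicit Defensive.
Section Gen.
Variable n : nat.
Notation T := 'I_n.+1.
Variable p : {perm T}.

Definition pw (k : nat) : {perm T} := (p ^+ k)%g.
Definition Lz (z : T) := #|porbit p z|.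
Definition Pp := [set X in porbits p | 1 < #|X|].
Definition arc (z : T) (m : nat) : {set T} := [set pw (val k) z | k : 'I_m].

Lemma pwE k x : pw k x = iter k p x.
Proof. exact: permX. Qed.

Lemma pX_inj z i j : i < Lz z -> j < Lz z -> pw i z = pw j z -> i = j.
Proof.
move=> hi hj; rewrite !pwE => e.
have U := uniq_traject_porbit p z.
have := nth_uniq z _ _ U; rewrite size_traject => /(_ i j hi hj).
by rewrite !nth_traject // e eqxx => /esym/eqP.
Qed.

Lemma pXL z : pw (Lz z) z = z.
Proof. by rewrite pwE iter_porbit. Qed.

Lemma pw0 z : pw 0 z = z.
Proof. by rewrite pwE. Qed.

Lemma Lz_gt0 z : 0 < Lz z.
Proof. by rewrite lt0n card_porbit_neq0. Qed.

Lemma porbit_ex z x : x \in porbit p z -> exists2 j, j < Lz z & x = pw j z.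
Proof.
rewrite porbit_traject => /trajectP[j hj ->]; exists j => //; by rewrite pwE.
Qed.

Lemma pXS k z : p (pw k z) = pw k.+1 z.
Proof. by rewrite !pwE. Qed.

Lemma mem_pw z k : pw k z \in porbit p z.
Proof. exact: mem_porbit. Qed.

Lemma porbit_of X x : X \in porbits p -> x \in X -> X = porbit p x.
Proof.
case/imsetP => w _ -> hx; apply/esym/eqP; by rewrite eq_porbit_mem.
Qed.

Lemma porbit_pX z k : porbit p (pw k z) = porbit p z.
Proof. exact: porbit_perm. Qed.

Lemma mem_porbitS X x : X \in porbits p -> x \in X -> p x \in X.
Proof.
move=> hX hx; rewrite (porbit_of hX hx).
have := mem_pw x 1; by rewrite pwE.
Qed.

Lemma Pp_moved X x : X \in Pp -> x \in X -> p x != x.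
Proof.
rewrite inE => /andP[hX hc] hx; apply/eqP => fx.
move: hc; rewrite (porbit_of hX hx).
suff: porbit p x \subset [set x] by move/subset_leq_card; rewrite cards1 ltnNge => ->.
apply/subsetP => w /porbitP[i ->]; by rewrite permX_fix // inE.
Qed.

Lemma porbits_disj X Y w : X \in porbits p -> Y \in porbits p -> w \in X -> w \in Y -> X = Y.
Proof. by move=> hX hY hx hy; rewrite (porbit_of hX hx) (porbit_of hY hy). Qed.

Lemma card_arc z m : m <= Lz z -> #|arc z m| = m.
Proof.
move=> hm; rewrite card_imset ?card_ord // => i j e; apply/val_inj.
by apply: pX_inj e; apply: leq_trans (ltn_ord _) hm.
Qed.

Lemma arc_sub z m : arc z m \subset porbit p z.
Proof. by apply/subsetP => _ /imsetP[k _ ->]; rewrite mem_pw. Qed.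

Lemma mem_arc z m j : j < m -> pw j z \in arc z m.
Proof. by move=> hj; apply/imsetP; exists (Ordinal hj). Qed.

Lemma arcP z m x : x \in arc z m -> exists2 j, j < m & x = pw j z.
Proof. by case/imsetP => k _ ->; exists k. Qed.

Lemma triv_sub (F : {set {set T}}) : F \subset porbits p -> trivIset F.
Proof.
move=> hF; apply/trivIsetP => A B hA hB ne; apply/pred0P => w /=.
apply/negbTE/negP => /andP[wa wb]; move/negP: ne; apply.
by rewrite (porbits_disj (subsetP hF _ hA) (subsetP hF _ hB) wa wb).
Qed.

Lemma card_cover_sub (F : {set {set T}}) : F \subset porbits p -> #|cover F| = \sum_(X in F) #|X|.
Proof. by move/triv_sub => /eqP ->. Qed.

Variable r : nat.
Definition good (z : T) (m : nat) (F : {set {set T}}) :=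
  [&& 0 < m, m.+2 <= Lz z & F \subset Pp :\ porbit p z].
Definition okt (z : T) (m : nat) (F : {set {set T}}) :=
  good z m F && (\sum_(X in F) #|X| + m == r.-1).
Definition Sb z m F := arc z m :|: cover F.
Definition fb z m F (x : T) : T :=
  if x \in Sb z m F then p x else if x == pw m z then z else x.
Definition gb z m F (x : T) : T := if injectiveb (fb z m F) then fb z m F x else x.
Lemma gb_inj z m F : injective (gb z m F).
Proof. rewrite /gb; case: (injectiveP (fb z m F)) => [H|_] a b //; exact: H. Qed.
Definition build z m F : {perm T} := perm (@gb_inj z m F).

Lemma buildE z m F : injective (fb z m F) -> build z m F =1 fb z m F.
Proof.
move=> inj x; rewrite /build permE /gb; by case: (injectiveP (fb z m F)).
Qed.

Section Good.
Variables (z : T) (m : nat) (F : {set {set T}}).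
Hypothesis hg : good z m F.

Let hm0 : 0 < m. Proof. by case/and3P: hg. Qed.
Let hmL : m.+2 <= Lz z. Proof. by case/and3P: hg. Qed.
Let hF : F \subset Pp :\ porbit p z. Proof. by case/and3P: hg. Qed.

Lemma F_porbits : F \subset porbits p.
Proof.
apply/subsetP => X /(subsetP hF); rewrite !inE => /and3P[_ ->] //.
Qed.

Lemma coverP' x : x \in cover F -> exists2 X, X \in F & x \in X.
Proof. by case/bigcupP => X hX hx; exists X. Qed.

Lemma cover_disj x : x \in cover F -> x \notin porbit p z.
Proof.
case/coverP' => X hX hx; apply/negP => hz.
have := subsetP hF _ hX; rewrite !inE => /andP[ne /andP[hXp _]].
move/negP: ne; apply; apply/eqP.
apply: (porbits_disj hXp _ hx hz); apply/imsetP; by exists z.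
Qed.

Lemma cover_closed x : x \in cover F -> p x \in cover F.
Proof.
case/coverP' => X hX hx; apply/bigcupP; exists X => //.
exact: mem_porbitS (subsetP F_porbits _ hX) hx.
Qed.

Lemma cover_moved x : x \in cover F -> p x != x.
Proof.
case/coverP' => X hX hx; apply: (Pp_moved _ hx).
by have := subsetP hF _ hX; rewrite !inE => /andP[].
Qed.

Let ltmL : m < Lz z. Proof. by apply: leq_trans hmL. Qed.

Lemma Sb_z : z \in Sb z m F.
Proof. by rewrite inE -{1}(pw0 z) mem_arc. Qed.

Lemma Sb_y : pw m z \notin Sb z m F.
Proof.
rewrite inE negb_or; apply/andP; split.
  apply/negP => /arcP[j hj] /pX_inj e.
  have := e ltmL (ltn_trans hj ltmL); move=> ej; by rewrite ej ltnn in hj.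
by apply/negP => /cover_disj; rewrite mem_pw.
Qed.

Lemma Sb_step x : x \in Sb z m F -> (p x \in Sb z m F) || (p x == pw m z).
Proof.
rewrite inE => /orP[/arcP[j hj ->]|hc].
  rewrite pXS; case: (ltngtP j.+1 m) => h.
  - by rewrite inE mem_arc.
  - by move: hj; rewrite ltnNge -ltnS h.
  - by rewrite h eqxx orbT.
by rewrite inE cover_closed ?orbT.
Qed.

Lemma Sb_nz x : x \in Sb z m F -> p x != z.
Proof.
rewrite inE => /orP[/arcP[j hj ->]|hc].
  rewrite pXS; apply/eqP; rewrite -{2}(pw0 z) => /pX_inj e.
  by have := e (leq_ltn_trans hj ltmL) (Lz_gt0 z).
apply/eqP => e; have := cover_disj (cover_closed hc).
by rewrite e porbit_id.
Qed.

Lemma Sb_moved x : x \in Sb z m F -> p x != x.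
Proof.
rewrite inE => /orP[/arcP[j hj ->]|hc]; last exact: cover_moved.
rewrite pXS; apply/eqP => /pX_inj e.
have := e (leq_ltn_trans hj ltmL) (ltn_trans hj ltmL); lia.
Qed.

Lemma py_nz : p (pw m z) != z.
Proof.
rewrite pXS; apply/eqP; rewrite -{2}(pw0 z) => /pX_inj e.
by have := e hmL (Lz_gt0 z).
Qed.

Lemma y_nz : pw m z != z.
Proof.
apply/eqP; rewrite -{2}(pw0 z) => /pX_inj e.
have := e ltmL (Lz_gt0 z); move: hm0; lia.
Qed.

Lemma fb_inj : injective (fb z m F).
Proof.
have key : forall a b, a \in Sb z m F -> b \notin Sb z m F -> fb z m F a != fb z m F b.
  move=> a b ha hb; rewrite /fb ha (negbTE hb).
  case: ifP => [_|hby].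
    by apply: Sb_nz.
  apply/eqP => e; have := Sb_step ha; rewrite e (negbTE hb) /=.
  by rewrite hby.
move=> a b.
case ha: (a \in Sb z m F); case hb: (b \in Sb z m F).
- by rewrite /fb ha hb; apply: perm_inj.
- by move=> e; have := key a b ha (negbT hb); rewrite e eqxx.
- by move=> e; have := key b a hb (negbT ha); rewrite e eqxx.
rewrite /fb ha hb.
case: ifP => [/eqP ->|h1]; case: ifP => [/eqP ->|h2] //.
- by move=> e; move: hb; rewrite -e Sb_z.
- by move=> e; move: ha; rewrite e Sb_z.
Qed.

Lemma arc_cover_disj : arc z m :&: cover F = set0.
Proof.
apply/setP => x; rewrite !inE; apply/negP => /andP[ha hc].
by have := cover_disj hc; rewrite (subsetP (arc_sub z m) _ ha).
Qed.

Lemma card_Sb : #|Sb z m F| = m + \sum_(X in F) #|X|.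
Proof.
by rewrite cardsU arc_cover_disj cards0 subn0 card_arc ?card_cover_sub ?F_porbits // ltnW // ltnW.
Qed.

Lemma Sb_orbit : Sb z m F :&: porbit p z = arc z m.
Proof.
apply/setP => x; rewrite !inE; apply/idP/idP.
  case/andP => /orP[//|/cover_disj]; by move/negbTE => ->.
by move=> ha; rewrite ha (subsetP (arc_sub z m) _ ha).
Qed.

Lemma Sb_F : [set X in porbits p | X \subset Sb z m F] = F.
Proof.
apply/setP => X; rewrite inE; apply/idP/idP.
  case/andP => hX hS.
  case/imsetP: (hX) => w _ eX.
  have hw : w \in Sb z m F by apply: (subsetP hS); rewrite eX porbit_id.
  move: hw; rewrite inE => /orP[/(subsetP (arc_sub z m))|].
    rewrite -eq_porbit_mem -eX => /eqP eXz.
    by have := Sb_y; rewrite (subsetP hS) // eXz mem_pw.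
  case/coverP' => Y hY hwY.
  have hYp := subsetP F_porbits _ hY.
  by rewrite (porbits_disj hX hYp _ hwY) // eX porbit_id.
move=> hX; rewrite (subsetP F_porbits _ hX) /=.
apply/subsetP => x hx; rewrite inE; apply/orP; right.
by apply/bigcupP; exists X.
Qed.

End Good.
Definition Sof (s : {perm T}) := [set x | (s x == p x) && (p x != x)].
Definition Mof (s : {perm T}) := [set x | s x != x].

Lemma card_Tc (s : {perm T}) : #|Tc s| = #|Mof s|.
Proof.
have -> : Tc s = (fun x => (x, s x)) @: Mof s.
  apply/setP => [[a b]]; rewrite inE /=; apply/idP/imsetP.
    by case/andP => /eqP -> h; exists a; rewrite ?inE.
  by case=> x; rewrite inE => h [-> ->]; rewrite eqxx.
by rewrite card_imset // => x y [].
Qed.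

Lemma card_TcI (s : {perm T}) : #|Tc s :&: Tc p| = #|Sof s|.
Proof.
have -> : Tc s :&: Tc p = (fun x => (x, s x)) @: Sof s.
  apply/setP => [[a b]]; rewrite !inE /=; apply/idP/imsetP.
    case/andP => /andP[/eqP -> h] /andP[/eqP e h2]; exists a => //.
    by rewrite inE e eqxx h2.
  case=> x; rewrite inE => /andP[/eqP e h] [-> ->]; by rewrite e eqxx h.
by rewrite card_imset // => x y [].
Qed.

Lemma inN3 (s : {perm T}) : (s \in N3 r p) = (#|Sof s| == r.-1) && (#|Mof s| == r).
Proof. by rewrite inE card_Tc card_TcI. Qed.

Lemma Sof_sub (s : {perm T}) : Sof s \subset Mof s.
Proof. by apply/subsetP => x; rewrite !inE => /andP[/eqP ->]. Qed.

Definition phi (s : {perm T}) : T * 'I_n.+1 * {set {set T}} :=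
  let y := odflt ord0 [pick x in Mof s :\: Sof s] in
  let z := s y in
  (z, inord #|Sof s :&: porbit p z|, [set X in porbits p | X \subset Sof s]).

Definition psi (t : T * 'I_n.+1 * {set {set T}}) := build t.1.1 t.1.2 t.2.

Lemma pick1 (A : {set T}) y : A = [set y] -> [pick x in A] = Some y.
Proof.
move=> ->; case: pickP => [x|/(_ y)]; rewrite inE ?eqxx // => /eqP -> //.
Qed.

Section Build.
Variables (z : T) (m : nat) (F : {set {set T}}).
Hypothesis hg : good z m F.

Lemma Sof_build : Sof (build z m F) = Sb z m F.
Proof.
apply/setP => x; rewrite inE (buildE (fb_inj hg)) /fb.
case: ifP => [h|h]; first by rewrite eqxx (Sb_moved hg h).
case: ifP => [/eqP ->|h2].
  by rewrite eq_sym (negbTE (py_nz hg)).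
case: eqP => // e; rewrite -e eqxx //.
Qed.

Lemma Mof_build : Mof (build z m F) = pw m z |: Sb z m F.
Proof.
apply/setP => x; rewrite in_setU1 [x \in Mof _]inE (buildE (fb_inj hg)) /fb.
case: ifP => [h|h]; first by rewrite (Sb_moved hg h) orbT.
case: ifP => [/eqP ->|h2]; first by rewrite eq_sym (y_nz hg) ?eqxx.
by rewrite eqxx.
Qed.

Hypothesis hsum : \sum_(X in F) #|X| + m = r.-1.

Lemma build_N3 : build z m F \in N3 r p.
Proof.
have hm0 : 0 < m by case/and3P: hg.
rewrite inN3 Sof_build Mof_build cardsU1 (Sb_y hg) (card_Sb hg) // addnC hsum eqxx /=.
apply/eqP; move: hsum; lia.
Qed.

Lemma phi_build (mo : 'I_n.+1) : val mo = m -> phi (build z m F) = (z, mo, F).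
Proof.
move=> emo.
have e1 : Mof (build z m F) :\: Sof (build z m F) = [set pw m z].
  rewrite Mof_build Sof_build; apply/setP => x; rewrite !inE.
  case: (x =P pw m z) => [->|_] /=; last by rewrite andNb.
  by rewrite andbT; have := Sb_y hg; rewrite inE.
rewrite /phi e1 (pick1 (erefl _)) /= (buildE (fb_inj hg)) /fb (negbTE (Sb_y hg)) eqxx.
rewrite Sof_build (Sb_orbit hg) // card_arc ?(Sb_F hg) //; last by case/and3P: hg => _ h _; lia.
by congr (_, _, _); apply: val_inj; rewrite /= inordK -emo ?ltn_ord.
Qed.

End Build.
Section Surj.
Variable s : {perm T}.
Hypothesis hr : 0 < r.
Hypothesis hN : s \in N3 r p.

Let hS : #|Sof s| = r.-1. Proof. by move: hN; rewrite inN3 => /andP[/eqP]. Qed.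
Let hM : #|Mof s| = r. Proof. by move: hN; rewrite inN3 => /andP[_ /eqP]. Qed.

Let y := odflt ord0 [pick x in Mof s :\: Sof s].

Lemma MS1 : Mof s :\: Sof s = [set y].
Proof.
have : #|Mof s :\: Sof s| == 1.
  rewrite cardsD (setIidPr (Sof_sub s)) hS hM; apply/eqP; lia.
case/cards1P => y0 e; by rewrite /y e (pick1 (erefl _)).
Qed.

Lemma MS_y x : x \in Mof s -> x \notin Sof s -> x = y.
Proof. by move=> h1 h2; apply/set1P; rewrite -MS1 inE h1 h2. Qed.

Lemma y_M : y \in Mof s. Proof. by have := set11 y; rewrite -MS1 inE => /andP[]. Qed.
Lemma y_S : y \notin Sof s. Proof. by have := set11 y; rewrite -MS1 inE => /andP[]. Qed.

Let z := s y.

Lemma z_y : z != y. Proof. by have := y_M; rewrite inE. Qed.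

Lemma M_closed x : x \in Mof s -> s x \in Mof s.
Proof. by rewrite !inE (inj_eq perm_inj). Qed.

Lemma z_S : z \in Sof s.
Proof.
apply: contraT => h; have := MS_y (M_closed y_M) h; by move/eqP; rewrite (negbTE z_y).
Qed.

Lemma S_step x : x \in Sof s -> (p x \in Sof s) || (p x == y).
Proof.
move=> hx; have hM' := subsetP (Sof_sub s) _ hx.
move: (hx); rewrite inE => /andP[/eqP e _].
case h: (p x \in Sof s) => //=; apply/eqP.
by rewrite -e; apply: MS_y; rewrite ?e ?h // -e M_closed.
Qed.

Let L := Lz z.

Lemma last_notS : pw L.-1 z \notin Sof s.
Proof.
apply/negP => h.
have e : s (pw L.-1 z) = s y.
  move: (h); rewrite inE => /andP[/eqP -> _].
  by rewrite pXS prednK ?Lz_gt0 // pXL.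
by move: y_S; rewrite -(perm_inj e) h.
Qed.

Lemma exk : exists k, pw k z \notin Sof s.
Proof. by exists L.-1; exact: last_notS. Qed.

Definition m0 := ex_minn exk.

Lemma m0_props : [/\ pw m0 z \notin Sof s, forall j, j < m0 -> pw j z \in Sof s
                  & m0 <= L.-1].
Proof.
rewrite /m0; case: ex_minnP => k hk hmin; split => //.
  by move=> j hj; apply: contraT => /hmin; rewrite leqNgt hj.
exact: hmin last_notS.
Qed.

Lemma m0_gt0 : 0 < m0.
Proof.
case: m0_props => h _ _; rewrite lt0n; apply/negP => /eqP e.
by move: h; rewrite e pw0 z_S.
Qed.

Lemma y_pw : y = pw m0 z.
Proof.
case: m0_props => h1 h2 _.
have hlt : m0.-1 < m0 by rewrite ltn_predL m0_gt0.
have := S_step (h2 _ hlt).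
by rewrite pXS prednK ?m0_gt0 // (negbTE h1) => /eqP.
Qed.


Lemma m0_le : m0.+2 <= L.
Proof.
case: m0_props => _ _ h.
have hL := Lz_gt0 z; rewrite -/L in hL.
case: (ltngtP m0 L.-1) => e; first by lia.
  by move: h; rewrite leqNgt e.
exfalso.
have hpy : p y = z by rewrite {1}y_pw pXS e prednK // pXL.
have : y \in Sof s by rewrite inE hpy eqxx /= z_y.
by rewrite (negbTE y_S).
Qed.

Lemma S_orbit : Sof s :&: porbit p z = arc z m0.
Proof.
apply/setP => x; rewrite inE; apply/idP/idP; last first.
  move=> ha; rewrite (subsetP (arc_sub z m0) _ ha) andbT.
  by case/arcP: ha => j hj ->; case: m0_props => _ h _; apply: h.
case/andP => hx /porbit_ex[j hj ex].
case: (ltngtP j m0) => e.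
- by rewrite ex mem_arc.
- exfalso.
  have fw : forall d, j + d <= L.-1 -> pw (j + d) z \in Sof s.
    elim=> [|d IH] hd; first by rewrite addn0 -ex.
    have := S_step (IH ltac:(lia)); rewrite pXS -addnS.
    case/orP => // /eqP; rewrite y_pw => /pX_inj ee.
    have := m0_le; rewrite -/L => hm.
    have := ee ltac:(lia) ltac:(lia); lia.
  have := fw (L.-1 - j) ltac:(lia).
  have -> : j + (L.-1 - j) = L.-1 by lia.
  by rewrite (negbTE last_notS).
- by move: hx; rewrite ex e -y_pw (negbTE y_S).
Qed.

Lemma S_out x : x \in Sof s -> x \notin porbit p z -> porbit p x \subset Sof s.
Proof.
move=> hx hz; apply/subsetP => w /porbitP[i ->].
elim: i => [|i IH]; first by rewrite expg0 perm1.
have := S_step IH; rewrite -[(p ^+ i)%g x]/(pw i x) pXS.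
case/orP => // /eqP e; exfalso; move/negP: hz; apply.
have : porbit p (pw i.+1 x) = porbit p (pw m0 z) by rewrite e y_pw.
rewrite !porbit_pX => <-; exact: porbit_id.
Qed.

Definition F0 := [set X in porbits p | X \subset Sof s].

Lemma Sof_eq : Sof s = Sb z m0 F0.
Proof.
apply/setP => x; rewrite [x \in Sb _ _ _]inE; apply/idP/idP.
  move=> hx; case hz: (x \in porbit p z).
    by rewrite -S_orbit in_setI hx hz.
  apply/orP; right; apply/bigcupP; exists (porbit p x); last exact: porbit_id.
  rewrite inE S_out ?hz // andbT; apply/imsetP; by exists x.
case/orP => [ha|/bigcupP[X]].
  by have := ha; rewrite -S_orbit in_setI => /andP[].
by rewrite inE => /andP[_ /subsetP h] /h.
Qed.

Lemma good0 : good z m0 F0.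
Proof.
rewrite /good m0_gt0 m0_le /=; apply/subsetP => X; rewrite !inE => /andP[hX hS'].
rewrite hX /=; apply/andP; split.
  apply/negP => /eqP eX; move: y_S; rewrite y_pw; apply/negP/negPn.
  by apply: (subsetP hS'); rewrite eX mem_pw.
case/imsetP: hX => w _ eX.
have hw : w \in Sof s by apply: (subsetP hS'); rewrite eX porbit_id.
have : [set w; p w] \subset X.
  apply/subsetP => v; rewrite !inE => /orP[] /eqP ->; rewrite eX ?porbit_id //.
  by have := mem_pw w 1; rewrite pwE.
move/subset_leq_card; rewrite cards2; move: hw; rewrite inE => /andP[_].
by rewrite eq_sym => ->.
Qed.

Lemma okt0 : okt z m0 F0.
Proof.
rewrite /okt good0 /=; apply/eqP.
by rewrite -hS Sof_eq (card_Sb good0) addnC.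
Qed.

Lemma m0_lt : m0 < n.+1.
Proof.
apply: leq_trans (_ : L <= n.+1); first by have := m0_le; lia.
by rewrite /L /Lz; apply: leq_trans (max_card _) _; rewrite card_ord.
Qed.

Lemma phi_s : phi s = (z, inord m0, F0).
Proof.
rewrite /phi -/y -/z Sof_eq (Sb_orbit good0) card_arc ?(Sb_F good0) //.
by have := m0_le; rewrite -/L; lia.
Qed.

Lemma psi_phi : psi (phi s) = s.
Proof.
rewrite phi_s /psi /= inordK ?m0_lt //; apply/permP => x.
rewrite (buildE (fb_inj good0)) /fb -Sof_eq -y_pw.
case: ifP => [|hx]; first by rewrite inE => /andP[/eqP ->].
case: ifP => [/eqP -> //|hy].
apply/esym/eqP; apply: contraFT hy => hm.
by rewrite (MS_y _ (negbT hx)) ?eqxx // inE.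
Qed.

End Surj.
Definition Trip := [set t : T * 'I_n.+1 * {set {set T}} | okt t.1.1 t.1.2 t.2].

Lemma N3_Trip : 0 < r -> #|N3 r p| = #|Trip|.
Proof.
move=> hr.
have inj : {in Trip &, injective psi}.
  move=> [[z1 m1] F1] [[z2 m2] F2]; rewrite !inE /= => /andP[g1 /eqP s1] /andP[g2 /eqP s2] e.
  by rewrite -(phi_build g1 s1 (erefl _)) -(phi_build g2 s2 (erefl _)); congr phi.
rewrite -(card_in_imset inj); suff -> : N3 r p = psi @: Trip by [].
apply/setP => s; apply/idP/imsetP.
  move=> hs; exists (phi s); last by rewrite psi_phi.
  rewrite inE phi_s //= inordK ?m0_lt //; exact: okt0.
case=> [[[z m] F]]; rewrite inE /= => /andP[g /eqP sm] ->.
exact: build_N3.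
Qed.

Definition G (A : {set {set T}}) (m : nat) :=
  #|[set F : {set {set T}} | (F \subset A) && (\sum_(X in F) #|X| + m == r.-1)]|.

Definition hX (X : {set T}) := \sum_(1 <= m < #|X|.-1) G (Pp :\ X) m.

Lemma Trip_sum : #|Trip| = \sum_(z : T) hX (porbit p z).
Proof.
rewrite -sum1_card.
transitivity (\sum_(z : T) \sum_(m : 'I_n.+1) \sum_(F | okt z m F) 1).
  rewrite pair_big /= pair_big_dep /=; apply: eq_bigl => t; by rewrite inE.
apply: eq_bigr => z _.
have e1 : forall m : 'I_n.+1, \sum_(F | okt z m F) 1 =
    if (0 < m) && (m.+2 <= Lz z) then G (Pp :\ porbit p z) m else 0.
  move=> m; rewrite sum1_card /G /okt /good.
  case: ifP => [/andP[-> ->]|h] /=.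
    by apply: eq_card => F; rewrite inE.
  apply: eq_card0 => F; apply/negbTE; move: h.
  by case: (0 < m) => //=; case: (m.+2 <= _).
rewrite (eq_bigr _ (fun m _ => e1 m)) /hX /Lz.
set L := #|porbit p z|.
have hL : L <= n.+1 by rewrite /L; apply: leq_trans (max_card _) _; rewrite card_ord.
have hL0 : 0 < L by exact: Lz_gt0.
rewrite -(big_mkord predT (fun m => if (0 < m) && (m.+2 <= L) then G (Pp :\ porbit p z) m else 0)).
rewrite (big_cat_nat (n := L.-1)) /=; [|by []|by lia].
rewrite [\sum_(L.-1 <= i < n.+1) _]big1_seq ?addn0; last first.
  move=> i; rewrite mem_index_iota => /andP[_ /andP[hi _]]; case: ifP => // /andP[_ h]; lia.
case: (posnP L.-1) => [->|hp]; first by rewrite !big_geq.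
rewrite big_ltn //= add0n; apply: eq_big_nat => i /andP[h1 h2].
by rewrite h1 /=; case: ifP => //; lia.
Qed.

Lemma sum_orbits (h : {set T} -> nat) :
  \sum_(z : T) h (porbit p z) = \sum_(X in porbits p) #|X| * h X.
Proof.
rewrite (partition_big (porbit p) (mem (porbits p))) /=; last first.
  by move=> z _; apply/imsetP; exists z.
apply: eq_bigr => X hX'.
rewrite (eq_bigr (fun _ => h X)); last by move=> z /eqP ->.
rewrite sum_nat_const; congr (_ * _); apply: eq_card => z.
rewrite unfold_in -[eqseq _ _]/(porbit p z == X); case/imsetP: hX' => w _ ->; by rewrite eq_porbit_mem.
Qed.

Lemma count_N3 : 0 < r -> #|N3 r p| = \sum_(X in porbits p) #|X| * hX X.
Proof. by move=> hr; rewrite N3_Trip // Trip_sum sum_orbits. Qed.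

End Gen.

Definition G2val (a c m : nat) := if (m <= c) && ~~ odd (c - m) then 'C(a, (c - m)./2) else 0.

Lemma arith2 x m c : (x * 2 + m == c) = [&& m <= c, ~~ odd (c - m) & x == (c - m)./2].
Proof.
have h := odd_double_half (c - m).
apply/idP/idP.
  move/eqP => e.
  have hmc : m <= c by lia.
  have e2 : c - m = x.*2 by rewrite -e; lia.
  by rewrite hmc e2 odd_double /= doubleK.
case/and3P => h1 /negbTE h2 /eqP ->; move: h; rewrite h2 add0n -muln2; lia.
Qed.

Lemma G_two n r (A : {set {set 'I_n.+1}}) m :
  {in A, forall X : {set 'I_n.+1}, #|X| = 2} -> G r A m = G2val #|A| r.-1 m.
Proof.
move=> hA; rewrite /G /G2val.
have es : forall F : {set {set 'I_n.+1}}, F \subset A -> \sum_(X in F) #|X| = #|F| * 2.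
  move=> F hF; transitivity (\sum_(X in F) 2); last by rewrite sum_nat_const.
  apply: eq_bigr => X hX; exact: hA (subsetP hF _ hX).
case: ifP => [h|h].
  rewrite -cards_draws; apply: eq_card => F; rewrite !inE.
  case hF: (F \subset A) => //=.
  by rewrite es // arith2; case/andP: h => -> ->.
apply: eq_card0 => F; rewrite !inE; apply/negbTE/negP => /andP[hF].
by rewrite es // arith2 => /and3P[h1 h2 _]; rewrite h1 h2 in h.
Qed.

Lemma G_add n r (A : {set {set 'I_n.+1}}) (Y : {set 'I_n.+1}) m :
  Y \notin A -> G r (Y |: A) m = G r A m + G r A (#|Y| + m).
Proof.
move=> hY; rewrite /G.
set S := [set F | _].
rewrite -(cardsID [set F : {set {set 'I_n.+1}} | Y \in F] S) addnC; congr (_ + _).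
  apply: eq_card => F; rewrite !inE.
  case hF: (Y \in F) => /=; last first.
    congr (_ && _); apply/idP/idP => h.
      apply/subsetP => X hX; have := subsetP h _ hX; rewrite in_setU1 => /orP[/eqP e|//].
      by move: hX; rewrite e hF.
    by apply: subset_trans h (subsetUr _ _).
  apply/esym/negbTE/negP => /andP[/subsetP h _]; by have := h _ hF; rewrite (negbTE hY).
set D := [set F : {set {set 'I_n.+1}} | (F \subset A) && (\sum_(X in F) #|X| + (#|Y| + m) == r.-1)].
have inj : {in D &, injective (fun F => Y |: F)}.
  move=> F1 F2; rewrite !inE => /andP[h1 _] /andP[h2 _] e.
  have n1 : Y \notin F1 by apply: contra hY => /(subsetP h1).
  have n2 : Y \notin F2 by apply: contra hY => /(subsetP h2).
  by rewrite -(setU1K n1) -(setU1K n2) e.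
rewrite -(card_in_imset inj); apply: eq_card => F; rewrite !inE.
apply/andP/imsetP.
  case=> /andP[hs he] hF; exists (F :\ Y).
    rewrite inE; apply/andP; split.
      apply/subsetP => X; rewrite !inE => /andP[ne hX].
      by have := subsetP hs _ hX; rewrite in_setU1 (negbTE ne).
    by rewrite -(eqP he) (big_setD1 Y hF) /= addnCA addnA.
  by rewrite setD1K.
case=> F' hF' ->; move: hF'; rewrite inE => /andP[hs he].
have nY : Y \notin F' by apply: contra hY => /(subsetP hs).
split; last exact: setU11.
rewrite setUS //= big_setU1 //= -(eqP he) addnA [#|Y| + _]addnC.
apply/eqP; congr (_ + _ + _); apply: eq_bigl => i /=; by rewrite ?inE.
Qed.

Lemma G2E a c m (k : int) : (c%:Z - m%:Z = k * 2)%R -> G2val a c m = binz a k.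
Proof.
rewrite /G2val; case: k => j e /=.
  have h1 : m <= c by lia.
  have h2 : c - m = j.*2 by rewrite -muln2; lia.
  by rewrite h1 h2 odd_double /= doubleK.
move: e; rewrite NegzE => e.
have h1 : c < m by lia.
by rewrite leqNgt h1.
Qed.

Lemma G2_odd a c m : odd (c + m) -> G2val a c m = 0.
Proof.
rewrite /G2val; case: ifP => // /andP[h1 h2].
by rewrite oddD -oddB // (negbTE h2).
Qed.

Lemma binz_sym a k : binz a k = binz a (a%:Z - k)%R.
Proof.
case: k => j.
  case: (leqP j a) => h.
    by rewrite subzn //= bin_sub.
  have -> : (a%:Z - j%:Z = Negz (j - a).-1)%R by rewrite NegzE; lia.
  by rewrite /= bin_small.
have -> : (a%:Z - Negz j = (a + j.+1)%:Z)%R by rewrite NegzE; lia.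
by rewrite /= bin_small //; lia.
Qed.

Lemma binzS a k : binz a.+1 k = binz a k + binz a (k - 1)%R.
Proof.
case: k => [[|j]|j].
- by have -> : (Posz 0 - 1 = Negz 0)%R by []; rewrite /= !bin0.
- have -> : ((j.+1)%:Z - 1 = j%:Z)%R by lia.
  by rewrite /= binS.
- by have -> : (Negz j - 1 = Negz j.+1)%R by rewrite !NegzE; lia.
Qed.

Lemma parB (f : nat -> nat) k :
  \sum_(1 <= m < k.*2.+1) f m = \sum_(1 <= i < k.+1) f (i.*2.-1) + \sum_(1 <= i < k.+1) f (i.*2).
Proof.
elim: k => [|k IH]; first by rewrite !big_geq.
rewrite doubleS (big_nat_recr k.*2.+2) // (big_nat_recr k.*2.+1) // IH.
rewrite [\sum_(1 <= i < k.+2) f i.*2.-1]big_nat_recr // [\sum_(1 <= i < k.+2) f i.*2]big_nat_recr //= doubleS /=; lia.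
Qed.

Lemma parA (f : nat -> nat) k :
  \sum_(1 <= m < k.*2) f m = \sum_(1 <= i < k.+1) f (i.*2.-1) + \sum_(1 <= i < k) f (i.*2).
Proof.
case: k => [|k]; first by rewrite !big_geq.
rewrite doubleS (big_nat_recr k.*2.+1) // parB.
rewrite [\sum_(1 <= i < k.+2) f i.*2.-1]big_nat_recr //= ?doubleS /=; lia.
Qed.

Lemma cc_one n (p : {perm 'I_n.+1}) k : cycle_count p k = 1 ->
  exists2 X, X \in porbits p & #|X| = k /\ forall Y, Y \in porbits p -> #|Y| = k -> Y = X.
Proof.
rewrite /cycle_count => /eqP/cards1P[X eX].
have : X \in [set X in porbits p | #|X| == k] by rewrite eX set11.
rewrite inE => /andP[hX /eqP hk]; exists X => //; split => // Y hY hYk.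
by apply/set1P; rewrite -eX inE hY hYk eqxx.
Qed.

Lemma cc_zero n (p : {perm 'I_n.+1}) k Y : cycle_count p k = 0 -> Y \in porbits p -> #|Y| != k.
Proof.
rewrite /cycle_count => /eqP; rewrite cards_eq0 => /eqP e hY; apply/negP => /eqP hk.
have : Y \in [set X in porbits p | #|X| == k] by rewrite inE hY hk eqxx.
by rewrite e inE.
Qed.

Lemma hX_small n (p : {perm 'I_n.+1}) r (X : {set 'I_n.+1}) : #|X| <= 2 -> hX p r X = 0.
Proof. by move=> h; rewrite /hX big_geq //; lia. Qed.

Lemma sum_one n (p : {perm 'I_n.+1}) r (X0 : {set 'I_n.+1}) : X0 \in porbits p ->
  (forall X, X \in porbits p -> 2 < #|X| -> X = X0) ->
  \sum_(X in porbits p) #|X| * hX p r X = #|X0| * hX p r X0.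
Proof.
move=> h0 hu; rewrite (bigD1 X0) //= big1 ?addn0 // => X /andP[hX ne].
case: (leqP #|X| 2) => h; first by rewrite hX_small ?muln0.
by rewrite (hu X hX h) eqxx in ne.
Qed.

Lemma sum_two n (p : {perm 'I_n.+1}) r (X0 X1 : {set 'I_n.+1}) : X0 \in porbits p -> X1 \in porbits p -> X0 != X1 ->
  (forall X, X \in porbits p -> 2 < #|X| -> X = X0 \/ X = X1) ->
  \sum_(X in porbits p) #|X| * hX p r X = #|X0| * hX p r X0 + #|X1| * hX p r X1.
Proof.
move=> h0 h1 ne01 hu; rewrite (bigD1 X0) //= (bigD1 X1) /=; last by rewrite h1 eq_sym.
rewrite big1 ?addn0 // => X /andP[/andP[hX ne0] ne1].
case: (leqP #|X| 2) => h; first by rewrite hX_small ?muln0.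
by case: (hu X hX h) => e; [rewrite e eqxx in ne0 | rewrite e eqxx in ne1].
Qed.

Lemma Pp_minus n (p : {perm 'I_n.+1}) (X0 : {set 'I_n.+1}) (B : {set {set 'I_n.+1}}) :
  X0 \in porbits p -> 1 < #|X0| ->
  (forall X, X \in porbits p -> 1 < #|X| -> X != X0 -> X \in B) ->
  B \subset Pp p :\ X0 -> Pp p :\ X0 = B.
Proof.
move=> h0 h1 hB hsub; apply/eqP; rewrite eqEsubset hsub andbT.
apply/subsetP => X; rewrite !inE => /andP[ne /andP[hX hc]]; exact: hB.
Qed.

Lemma part1 n (p : {perm 'I_n.+1}) (t r s : nat) :
  2 <= t -> (r == 2 * t) || (r == 2 * t + 1) -> 2 <= s <= r ->
  (forall k, 1 < k -> cycle_count p k =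
        (if k == 2 * s - 1 then 1 else if k == 2 then r - s else 0)) ->
  #|N3 r p| =
       (if r == 2 * t
        then (2 * s - 1) * \sum_(1 <= i < s) binz (r - s) (t%:Z - i%:Z)%R
        else (2 * s - 1) * \sum_(1 <= i < s.-1) binz (r - s) (t%:Z - i%:Z)%R).
Proof.
move=> ht hr /andP[hs1 hs2] hc.
have c1 : cycle_count p (2 * s - 1) = 1 by rewrite hc ?eqxx //; lia.
case: (cc_one c1) => X0 hX0 [hc0 hu0].
have hu : forall X, X \in porbits p -> 2 < #|X| -> X = X0.
  move=> X hX h2; have := hc #|X| (ltnW h2).
  case: eqP => [e _|ne]; first exact: hu0.
  have -> : (#|X| == 2) = false by apply/negbTE; rewrite neq_ltn h2 orbT.
  by move/(cc_zero)/(_ hX); rewrite eqxx.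
set T2 := [set X in porbits p | #|X| == 2].
have cT2 : #|T2| = r - s.
  have := hc 2 (ltnSn 1); rewrite /cycle_count -/T2 => ->.
  by have -> : (2 == 2 * s - 1) = false by apply/negbTE; lia.
have eP : Pp p :\ X0 = T2.
  apply: Pp_minus => //; first by rewrite hc0; lia.
    move=> X hX h1 ne; rewrite inE hX /=; case: (ltngtP #|X| 2) => // h; first lia.
    by rewrite (hu X hX h) eqxx in ne.
  apply/subsetP => X; rewrite !inE => /andP[hX /eqP h2]; rewrite hX h2 /= andbT.
  by apply/negP => /eqP e; move: h2; rewrite e hc0; lia.
have h2s : forall X, X \in T2 -> #|X| = 2 by move=> X; rewrite inE => /andP[_ /eqP].
rewrite count_N3; last by case/orP: hr => /eqP ->; lia.
rewrite (sum_one _ hX0 hu) hc0 /hX hc0 eP.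
rewrite (eq_bigr (fun m => G2val #|T2| r.-1 m)); last by move=> m _; rewrite G_two.
have -> : (2 * s - 1).-1 = (s.-1).*2 by rewrite -muln2; lia.
rewrite parA prednK; last by lia.
rewrite cT2; case/orP: hr => /eqP er.
- rewrite er eqxx; congr (_ * _).
  rewrite [X in _ + X]big1_seq ?addn0; last first.
    move=> i _; apply: G2_odd.
    have -> : (2 * t).-1 + i.*2 = (t.-1 + i).*2.+1 by rewrite -!muln2; lia.
    by rewrite /= odd_double.
  apply: eq_big_nat => i /andP[h1 h2]; apply: G2E; lia.
- have -> : (r == 2 * t) = false by rewrite er; apply/negbTE; lia.
  congr (_ * _).
  rewrite [X in X + _]big1_seq ?add0n; last first.
    move=> i /andP[_]; rewrite mem_index_iota => /andP[h1 _]; apply: G2_odd.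
    have -> : r.-1 + i.*2.-1 = (t + i.-1).*2.+1 by rewrite -!muln2; lia.
    by rewrite /= odd_double.
  apply: eq_big_nat => i /andP[h1 h2]; apply: G2E; lia.
Qed.

Lemma G2_oddq a c m q : c + m = q.*2.+1 -> G2val a c m = 0.
Proof. by move=> e; apply: G2_odd; rewrite e /= odd_double. Qed.

Lemma part2 n (p : {perm 'I_n.+1}) (t r s : nat) :
  2 <= t -> (r == 2 * t) || (r == 2 * t + 1) -> 2 <= s <= r - 2 ->
  (forall k, 1 < k -> cycle_count p k =
        (if k == 2 * s then 1 else if k == 3 then 1
         else if k == 2 then r - s - 2 else 0)) ->
  #|N3 r p| =
       (if r == 2 * t
        then 2 * (2 * s + 3) * binz (r - s - 2) (t%:Z - 1)%R
             + 2 * s * \sum_(1 <= i < s.-1) binz (r - s - 1) (t%:Z - i%:Z - 1)%R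
        else 2 * s * \sum_(1 <= i < s) binz (r - s - 1) (t%:Z - i%:Z)%R).
Proof.
move=> ht hr /andP[hs1 hs2] hc.
have c0 : cycle_count p (2 * s) = 1 by rewrite hc ?eqxx //; lia.
have c3 : cycle_count p 3 = 1.
  by rewrite hc //; have -> : (3 == 2 * s) = false by apply/negbTE; lia.
case: (cc_one c0) => X0 hX0 [hc0 hu0].
case: (cc_one c3) => X3 hX3 [hc3 hu3].
have ne03 : X0 != X3 by apply/negP => /eqP e; move: hc0; rewrite e hc3; lia.
have hu : forall X, X \in porbits p -> 2 < #|X| -> X = X0 \/ X = X3.
  move=> X hX h2; have := hc #|X| (ltnW h2).
  case: eqP => [e _|ne]; first by left; exact: hu0.
  case: eqP => [e _|ne3]; first by right; exact: hu3.
  have -> : (#|X| == 2) = false by apply/negbTE; rewrite neq_ltn h2 orbT.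
  by move/(cc_zero)/(_ hX); rewrite eqxx.
set T2 := [set X in porbits p | #|X| == 2].
have cT2 : #|T2| = r - s - 2.
  have := hc 2 (ltnSn 1); rewrite /cycle_count -/T2 => ->.
  by have -> : (2 == 2 * s) = false by apply/negbTE; lia.
have h2s : forall X, X \in T2 -> #|X| = 2 by move=> X; rewrite inE => /andP[_ /eqP].
have n0 : X0 \notin T2 by apply/negP => /h2s; rewrite hc0; lia.
have n3 : X3 \notin T2 by apply/negP => /h2s; rewrite hc3.
have inT2 : forall X, X \in porbits p -> 1 < #|X| -> X != X0 -> X != X3 -> X \in T2.
  move=> X hX h1 ne ne'; rewrite inE hX /=; case: (ltngtP #|X| 2) => // h; first lia.
  by case: (hu X hX h) => e; [rewrite e eqxx in ne | rewrite e eqxx in ne'].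
have sub : forall Y Z, Y \in porbits p -> 1 < #|Y| -> Z != Y -> 2 < #|Z| ->
    Y |: T2 \subset Pp p :\ Z.
  move=> Y Z hY h1 ne hZ; apply/subsetP => X; rewrite in_setU1 => /orP[/eqP ->|].
    by rewrite !inE eq_sym ne hY h1.
  rewrite !inE => /andP[hX /eqP h2]; rewrite hX h2 /= andbT.
  by apply/negP => /eqP e; move: h2; rewrite e; lia.
have eP0 : Pp p :\ X0 = X3 |: T2.
  apply: Pp_minus => //; first by rewrite hc0; lia.
    move=> X hX h1 ne; rewrite in_setU1; case: eqP => //= /eqP ne'.
    exact: inT2.
  by apply: sub; rewrite ?hc3 ?hc0 //; lia.
have eP3 : Pp p :\ X3 = X0 |: T2.
  apply: Pp_minus => //; first by rewrite hc3.
    move=> X hX h1 ne; rewrite in_setU1; case: eqP => //= /eqP ne'.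
    exact: inT2.
  by apply: sub; rewrite ?hc3 ?hc0 1?eq_sym //; lia.
rewrite count_N3; last by case/orP: hr => /eqP ->; lia.
rewrite (sum_two _ hX0 hX3 ne03 hu) hc0 hc3 /hX hc0 hc3 eP0 eP3.
rewrite (eq_bigr (fun m => G2val #|T2| r.-1 m + G2val #|T2| r.-1 (3 + m))); last first.
  by move=> m _; rewrite (@G_add n r T2 X3 m) // !G_two // hc3.
rewrite [\sum_(1 <= m < 3.-1) _](eq_bigr (fun m => G2val #|T2| r.-1 m + G2val #|T2| r.-1 (2 * s + m))); last first.
  by move=> m _; rewrite (@G_add n r T2 X0 m) // !G_two // hc0.
rewrite /= big_nat1.
have -> : (2 * s).-1 = (s.-1).*2.+1 by rewrite -muln2; lia.
rewrite parB prednK; last by lia.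
rewrite cT2; set a := r - s - 2.
have ea : r - s - 1 = a.+1 by rewrite /a; lia.
rewrite ea; clear ea; case/orP: hr => /eqP er.
- rewrite er eqxx.
  have S1 : \sum_(1 <= i < s) (G2val a (2 * t).-1 i.*2.-1 + G2val a (2 * t).-1 (3 + i.*2.-1))
      = \sum_(1 <= i < s) binz a (t%:Z - i%:Z)%R.
    apply: eq_big_nat => i /andP[h1 h2].
    rewrite [G2val a _ (3 + _)](@G2_oddq _ _ _ (t + i)); last by rewrite -!muln2; lia.
    rewrite addn0; apply: G2E; lia.
  have S2 : \sum_(1 <= i < s) (G2val a (2 * t).-1 i.*2 + G2val a (2 * t).-1 (3 + i.*2))
      = \sum_(1 <= i < s) binz a (t%:Z - i%:Z - 1 - 1)%R.
    apply: eq_big_nat => i /andP[h1 h2].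
    rewrite [G2val a _ i.*2](@G2_oddq _ _ _ (t + i - 1)); last by rewrite -!muln2; lia.
    rewrite add0n; apply: G2E; lia.
  have S3 : G2val a (2 * t).-1 1 = binz a (t%:Z - 1)%R by apply: G2E; lia.
  have S4 : G2val a (2 * t).-1 (2 * s + 1) = binz a (t%:Z - 1)%R.
    rewrite (@G2E _ _ _ (t%:Z - 1 - s%:Z)%R); last by lia.
    rewrite binz_sym; f_equal; rewrite /a; lia.
  have E1 : \sum_(1 <= i < s) binz a (t%:Z - i%:Z)%R
      = binz a (t%:Z - 1)%R + \sum_(1 <= i < s.-1) binz a (t%:Z - i%:Z - 1)%R.
    rewrite big_ltn; last by lia.
    congr (_ + _).
    rewrite big_add1; apply: eq_big_nat => i _; f_equal; lia.
  have E2 : \sum_(1 <= i < s) binz a (t%:Z - i%:Z - 1 - 1)%R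
      = \sum_(1 <= i < s.-1) binz a (t%:Z - i%:Z - 1 - 1)%R + binz a (t%:Z - 1)%R.
    rewrite -{1}(prednK (_ : 0 < s)); last by lia.
    rewrite big_nat_recr /=; last by lia.
    congr (_ + _); rewrite binz_sym; f_equal; rewrite /a; lia.
  have E3 : \sum_(1 <= i < s.-1) binz a.+1 (t%:Z - i%:Z - 1)%R
      = \sum_(1 <= i < s.-1) binz a (t%:Z - i%:Z - 1)%R
        + \sum_(1 <= i < s.-1) binz a (t%:Z - i%:Z - 1 - 1)%R.
    by rewrite -big_split /=; apply: eq_bigr => i _; rewrite binzS.
  rewrite S1 S2 S3 S4 E1 E2 E3; lia.
- have -> : (r == 2 * t) = false by rewrite er; apply/negbTE; lia.
  rewrite er.
  have S1 : \sum_(1 <= i < s) (G2val a (2 * t + 1).-1 i.*2.-1 + G2val a (2 * t + 1).-1 (3 + i.*2.-1))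
      = \sum_(1 <= i < s) binz a (t%:Z - i%:Z - 1)%R.
    apply: eq_big_nat => i /andP[h1 h2].
    rewrite [G2val a _ i.*2.-1](@G2_oddq _ _ _ (t + i - 1)); last by rewrite -!muln2; lia.
    rewrite add0n; apply: G2E; lia.
  have S2 : \sum_(1 <= i < s) (G2val a (2 * t + 1).-1 i.*2 + G2val a (2 * t + 1).-1 (3 + i.*2))
      = \sum_(1 <= i < s) binz a (t%:Z - i%:Z)%R.
    apply: eq_big_nat => i /andP[h1 h2].
    rewrite [G2val a _ (3 + _)](@G2_oddq _ _ _ (t + i + 1)); last by rewrite -!muln2; lia.
    rewrite addn0; apply: G2E; lia.
  have S3 : G2val a (2 * t + 1).-1 1 = 0.
    by apply: (@G2_oddq _ _ _ (t)); rewrite -!muln2; lia.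
  have S4 : G2val a (2 * t + 1).-1 (2 * s + 1) = 0.
    by apply: (@G2_oddq _ _ _ (t + s)); rewrite -!muln2; lia.
  have E3 : \sum_(1 <= i < s) binz a.+1 (t%:Z - i%:Z)%R
      = \sum_(1 <= i < s) binz a (t%:Z - i%:Z)%R
        + \sum_(1 <= i < s) binz a (t%:Z - i%:Z - 1)%R.
    by rewrite -big_split /=; apply: eq_bigr => i _; rewrite binzS.
  rewrite S1 S2 S3 S4 E3; lia.
Qed.

Theorem lemma13 (t r n : nat) :
  2 <= t -> (r == 2 * t) || (r == 2 * t + 1) -> 2 * r - 1 <= n ->
  (forall (s : nat) (p : {perm 'I_n}),
     2 <= s <= r ->
     (forall k, 1 < k -> cycle_count p k =
        (if k == 2 * s - 1 then 1 else if k == 2 then r - s else 0)) ->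
     #|N3 r p| =
       (if r == 2 * t
        then (2 * s - 1) * \sum_(1 <= i < s) binz (r - s) (t%:Z - i%:Z)%R
        else (2 * s - 1) * \sum_(1 <= i < s.-1) binz (r - s) (t%:Z - i%:Z)%R)) /\
  (forall (s : nat) (p : {perm 'I_n}),
     2 <= s <= r - 2 ->
     (forall k, 1 < k -> cycle_count p k =
        (if k == 2 * s then 1 else if k == 3 then 1
         else if k == 2 then r - s - 2 else 0)) ->
     #|N3 r p| =
       (if r == 2 * t
        then 2 * (2 * s + 3) * binz (r - s - 2) (t%:Z - 1)%R
             + 2 * s * \sum_(1 <= i < s.-1) binz (r - s - 1) (t%:Z - i%:Z - 1)%R
        else 2 * s * \sum_(1 <= i < s) binz (r - s - 1) (t%:Z - i%:Z)%R)).
Proof.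
move=> ht hr hn.
case: n hn => [|n'] hn.
  by exfalso; case/orP: hr => /eqP e; move: hn; rewrite e; lia.
split => s p hs hc; [exact: part1 | exact: part2].
Qed.
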